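(* Let $\mathcal{X}=\mathbb{R}^d$ with Euclidean metric $|\cdot|_2$, let $\mu,\nu$ be Borel probability measures on $\mathbb{R}^d$ with $\nu$ having finite first moment and not a Dirac measure, and let $\pi\in\Pi(\mu,\nu)$. Define $$T^{\mathrm{DGS}}(\pi)=1-\frac{\int\int\int|y-z|_2\,\pi_{x_1}(dy)\,\pi_{x_1}(dz)\,\mu(dx_1)}{\int\int|y-z|_2\,\nu(dy)\,\nu(dz)}.$$ Then $T^{\mathrm{DGS}}(\pi)\le 2\,\overrightarrow{\mathcal{W}}(\pi)$.
   Context: $\Pi(\mu,\nu)$ is the set of couplings of $\mu,\nu$; $\pi_{x_1}$ is the disintegration of $\pi$ w.r.t. the first coordinate. $\mathcal{W}(\alpha,\beta)=\inf_{\gamma\in\Pi(\alpha,\beta)}\int|x-y|_2\,\gamma(dx,dy)$. The Wasserstein correlation coefficient is $\overrightarrow{\mathcal{W}}(\pi)=\int\mathcal{W}(\pi_{x_1},\nu)\,\mu(dx_1)\big/\int\int|y-z|_2\,\nu(dy)\nu(dz)$. *)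

(* Defs.v *)
From HB Require Import structures.
From mathcomp Require Import all_boot all_order all_algebra.
From mathcomp Require Import all_classical all_reals all_analysis.
Set Implicit Arguments. Unset Strict Implicit. Unset Printing Implicit Defensive.
Import Order.TTheory GRing.Theory Num.Theory.
Import numFieldNormedType.Exports.
Local Open Scope classical_set_scope.
Local Open Scope ring_scope.

(* R^d as row vectors, equipped with its Borel sigma-algebra
   (generated by the open sets of the product = Euclidean topology). *)
Definition Rd (R : realType) (d : nat) : measurableType _ :=
  g_sigma_algebraType (open : set (set 'rV[R]_d)).

Definition eucl_dist (R : realType) (d : nat) (y z : 'rV[R]_d) : R :=
  Num.sqrt (\sum_(i < d) (y ord0 i - z ord0 i) ^+ 2).

Definition coupling {d1 d2} {T1 : measurableType d1} {T2 : measurableType d2}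
  (R : realType) (mu : set T1 -> \bar R) (nu : set T2 -> \bar R)
  (pi : probability (T1 * T2)%type R) : Prop :=
  (forall A : set T1, measurable A -> pi (A `*` setT) = mu A) /\
  (forall B : set T2, measurable B -> pi (setT `*` B) = nu B).

Definition disintegration {d1 d2} {T1 : measurableType d1} {T2 : measurableType d2}
  (R : realType) (mu : probability T1 R) (pi : probability (T1 * T2)%type R)
  (k : R.-pker T1 ~> T2) : Prop :=
  forall (A : set T1) (B : set T2), measurable A -> measurable B ->
    pi (A `*` B) = (\int[mu]_(x in A) k x B)%E.

Definition W1 (R : realType) (d : nat)
  (alpha beta : set (Rd R d) -> \bar R) : \bar R :=
  ereal_inf [set (\int[gamma]_p (eucl_dist p.1 p.2)%:E)%E
            | gamma in [set gamma : probability (Rd R d * Rd R d)%type R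
                       | coupling alpha beta gamma]].

Local Open Scope ereal_scope.

(* extended-real division by a (finite, positive) extended real *)
Definition ediv (R : realType) (a b : \bar R) : \bar R := a * ((fine b)^-1)%:E.

(* T^DGS(pi), with pi_{x1} given by the disintegration kernel k *)
Definition T_DGS (R : realType) (d : nat) (mu nu : probability (Rd R d) R)
  (k : R.-pker (Rd R d) ~> (Rd R d)) : \bar R :=
  1 - ediv (\int[mu]_x1 \int[k x1]_y \int[k x1]_z (eucl_dist y z)%:E)
           (\int[nu]_y \int[nu]_z (eucl_dist y z)%:E).

Definition W_corr (R : realType) (d : nat) (mu nu : probability (Rd R d) R)
  (k : R.-pker (Rd R d) ~> (Rd R d)) : \bar R :=
  ediv (\int[mu]_x1 W1 (k x1) nu)
       (\int[nu]_y \int[nu]_z (eucl_dist y z)%:E).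

(* Main.v *)
Require Import Defs.
From HB Require Import structures.
From mathcomp Require Import all_boot all_order all_algebra.
From mathcomp Require Import all_classical all_reals all_analysis.
From mathcomp Require Import ring lra.
From mathcomp Require Import measurable_realfun.
Set Implicit Arguments. Unset Strict Implicit. Unset Printing Implicit Defensive.
Import Order.TTheory GRing.Theory Num.Theory.
Import numFieldNormedType.Exports.
Local Open Scope classical_set_scope.
Local Open Scope ring_scope.
Lemma cs_sum (R : realType) n (a b : 'I_n -> R) :
  \sum_i a i * b i <= Num.sqrt (\sum_i a i ^+ 2) * Num.sqrt (\sum_i b i ^+ 2).
Proof.
set A := \sum_i a i ^+ 2; set B := \sum_i b i ^+ 2.
have A0 : 0 <= A by apply: sumr_ge0 => i _; exact: sqr_ge0.
have B0 : 0 <= B by apply: sumr_ge0 => i _; exact: sqr_ge0.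
set s := Num.sqrt A; set t := Num.sqrt B.
have s0 : 0 <= s by exact: sqrtr_ge0.
have t0 : 0 <= t by exact: sqrtr_ge0.
have ss : s ^+ 2 = A by rewrite sqr_sqrtr.
have tt : t ^+ 2 = B by rewrite sqr_sqrtr.
have key : (2 * s * t) * (\sum_i a i * b i) <= t ^+ 2 * A + s ^+ 2 * B.
  rewrite mulr_sumr /A /B !mulr_sumr -big_split /=; apply: ler_sum => i _.
  have := sqr_ge0 (t * a i - s * b i); nra.
rewrite ss tt in key.
have [st0|st0] := eqVneq (s * t) 0.
  rewrite st0.
  have [s00|s00] := eqVneq s 0.
    have A00 : A = 0 by rewrite -ss s00 expr0n.
    have ai0 : forall i, a i = 0.
      move=> i; apply/eqP; rewrite -sqrf_eq0; apply/eqP.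
      move/eqP: A00; rewrite psumr_eq0 => [/allP H|]; last by move=> j _; exact: sqr_ge0.
      by apply/eqP; apply: H; rewrite mem_index_enum.
    by rewrite big1 // => i _; rewrite ai0 mul0r.
  have /eqP t00 : t == 0 by move/eqP: st0; rewrite mulf_eq0 (negbTE s00).
  have B00 : B = 0 by rewrite -tt t00 expr0n.
  have bi0 : forall i, b i = 0.
    move=> i; apply/eqP; rewrite -sqrf_eq0; apply/eqP.
    move/eqP: B00; rewrite psumr_eq0 => [/allP H|]; last by move=> j _; exact: sqr_ge0.
    by apply/eqP; apply: H; rewrite mem_index_enum.
  by rewrite big1 // => i _; rewrite bi0 mulr0.
have stp : 0 < s * t by rewrite lt_def st0 mulr_ge0.
have : (2 * s * t) * (\sum_i a i * b i) <= (2 * s * t) * (s * t).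
  by apply: (le_trans key); rewrite -ss -tt le_eqVlt; apply/orP; left; apply/eqP; ring.
by rewrite ler_pM2l // -mulrA mulr_gt0.
Qed.
Section dist.
Variables (R : realType) (d : nat).
Implicit Types x y z : 'rV[R]_d.

Lemma dist_ge0 x y : 0 <= eucl_dist x y.
Proof. exact: sqrtr_ge0. Qed.

Lemma distC x y : eucl_dist x y = eucl_dist y x.
Proof.
rewrite /eucl_dist; congr Num.sqrt; apply: eq_bigr => i _.
by rewrite -sqrrN opprB.
Qed.

Lemma dist_tri x y z : eucl_dist x z <= eucl_dist x y + eucl_dist y z.
Proof.
rewrite /eucl_dist.
set a := fun i : 'I_d => x ord0 i - y ord0 i.
set b := fun i : 'I_d => y ord0 i - z ord0 i.
have -> : \sum_(i < d) (x ord0 i - z ord0 i) ^+ 2 = \sum_i (a i + b i) ^+ 2.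
  by apply: eq_bigr => i _; rewrite /a /b addrA subrK.
have cs := cs_sum a b.
set s := Num.sqrt (\sum_i a i ^+ 2) in cs *.
set t := Num.sqrt (\sum_i b i ^+ 2) in cs *.
have s0 : 0 <= s by exact: sqrtr_ge0.
have t0 : 0 <= t by exact: sqrtr_ge0.
have ss : s ^+ 2 = \sum_i a i ^+ 2 by rewrite sqr_sqrtr // sumr_ge0 // => i _; exact: sqr_ge0.
have tt : t ^+ 2 = \sum_i b i ^+ 2 by rewrite sqr_sqrtr // sumr_ge0 // => i _; exact: sqr_ge0.
have -> : \sum_i (a i + b i) ^+ 2 = s ^+ 2 + t ^+ 2 + 2 * \sum_i a i * b i.
  rewrite ss tt mulr_sumr -!big_split /=; apply: eq_bigr => i _; ring.
rewrite -(@ger0_norm _ (s + t)); last exact: addr_ge0.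
rewrite -sqrtr_sqr ler_sqrt; last exact: sqr_ge0.
nra.
Qed.

Lemma dist_eq0 x y : eucl_dist x y = 0 -> x = y.
Proof.
rewrite /eucl_dist => /eqP; rewrite sqrtr_eq0 => H.
have : \sum_(i < d) (x ord0 i - y ord0 i) ^+ 2 == 0.
  by rewrite eq_le H sumr_ge0 // => i _; exact: sqr_ge0.
rewrite psumr_eq0 => [/allP H2|]; last by move=> j _; exact: sqr_ge0.
apply/rowP => i; apply/eqP; rewrite -subr_eq0 -sqrf_eq0.
by apply: H2; rewrite mem_index_enum.
Qed.

Lemma dist_refl x : eucl_dist x x = 0.
Proof. by rewrite /eucl_dist big1 ?sqrtr0 // => i _; rewrite subrr expr0n. Qed.

End dist.
Section meas.
Variables (R : realType) (d : nat).
Local Notation X := (Rd R d).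

Lemma mcoord (i : 'I_d) : measurable_fun [set: X] (fun y : X => (y : 'rV[R]_d) ord0 i).
Proof.
apply: (measurability _ (measurable_realfun.RGenOpens.measurableE R)).
move=> _ [_ [a [b ->] <-]]; apply: sub_sigma_algebra; rewrite setTI.
have := @coord_continuous R 1 d ord0 i.
move/continuousP => /(_ _ (@interval_open R (BRight a) (BLeft b) isT isT)).
by [].
Qed.

Lemma mdist : measurable_fun [set: X * X]
  (fun p : X * X => eucl_dist (p.1 : 'rV[R]_d) p.2).
Proof.
rewrite /eucl_dist.
apply: measurableT_comp; first exact: measurable_realfun.continuous_measurable_fun (@sqrt_continuous R).
apply: measurable_sum => i.
apply: measurable_realfun.measurable_funX.
apply: measurable_realfun.measurable_funB.
- exact: measurableT_comp (mcoord i) measurable_fst.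
- exact: measurableT_comp (mcoord i) measurable_snd.
Qed.

Lemma mEdist : measurable_fun [set: X * X]
  (fun p : X * X => ((eucl_dist (p.1 : 'rV[R]_d) p.2)%:E : \bar R)).
Proof. by apply: measurableT_comp => //; exact: mdist. Qed.

End meas.
Section nm.
Local Open Scope ereal_scope.
Context d (T : measurableType d) (R : realType) (mu : {measure set T -> \bar R}).

Lemma le_integral_nm (f g : T -> \bar R) : (forall x, 0 <= f x) ->
  (forall x, f x <= g x) -> \int[mu]_x f x <= \int[mu]_x g x.
Proof.
move=> f0 fg.
have g0 x : 0 <= g x by exact: le_trans (f0 x) (fg x).
rewrite !ge0_integralTE //.
apply: ge_ereal_sup => _ [h hf <-]; apply: ereal_sup_ubound; exists h => //= x.
exact: le_trans (hf x) (fg x).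
Qed.
End nm.

Section kfst.
Context d1 d2 d3 (X : measurableType d1) (Y : measurableType d2)
  (Z : measurableType d3) (R : realType) (k : R.-fker X ~> Z).

Definition kfst : X * Y -> {measure set Z -> \bar R} := fun p => k p.1.

Let mkfst U : measurable U -> measurable_fun [set: X * Y] (kfst ^~ U).
Proof.
move=> mU; exact: measurableT_comp (measurable_kernel k U mU) measurable_fst.
Qed.

HB.instance Definition _ := @isKernel.Build _ _ _ _ _ kfst mkfst.

Let kfst_uub : measure_fam_uub kfst.
Proof. by have [r kr] := measure_uub k; exists r => p; exact: kr. Qed.

HB.instance Definition _ := @Kernel_isFinite.Build _ _ _ _ _ kfst kfst_uub.
End kfst.
Section mD.
Local Open Scope ereal_scope.
Variables (R : realType) (d : nat).
Local Notation X := (Rd R d).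

Lemma mEdist_comp d0 (T : measurableType d0) (f g : T -> X) :
  measurable_fun setT f -> measurable_fun setT g ->
  measurable_fun [set: T] (fun t => (eucl_dist (f t) (g t))%:E).
Proof.
move=> mf mg.
exact: (measurableT_comp (@mEdist R d) (measurable_fun_pair mf mg)).
Qed.

Lemma mDk (k : R.-pker X ~> X) :
  measurable_fun [set: X] (fun x => \int[k x]_y \int[k x]_z (eucl_dist y z)%:E).
Proof.
have mF : measurable_fun [set: X * X]
    (fun p : X * X => \int[k p.1]_z (eucl_dist p.2 z)%:E).
  apply: (measurable_fun_integral_finite_kernel
    (fun q : (X * X) * X => (eucl_dist q.1.2 q.2)%:E) (@kfst _ _ _ _ X _ _ k)).
  - by move=> q; rewrite lee_fin dist_ge0.
  - apply: mEdist_comp.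
    + exact: measurableT_comp measurable_snd measurable_fst.
    + exact: measurable_snd.
apply: (measurable_fun_integral_finite_kernel
   (fun p : X * X => \int[k p.1]_z (eucl_dist p.2 z)%:E) k) => //.
move=> p; apply: integral_ge0 => z _; rewrite lee_fin; exact: dist_ge0.
Qed.

End mD.
Section mh.
Local Open Scope ereal_scope.
Variables (R : realType) (d : nat).
Local Notation X := (Rd R d).

Lemma mh (m : {finite_measure set X -> \bar R}) :
  measurable_fun [set: X] (fun y : X => \int[m]_z (eucl_dist y z)%:E).
Proof.
apply: (measurable_fun_fubini_tonelli_F (fun q : X * X => (eucl_dist q.1 q.2)%:E)).
- exact: mEdist.
- by move=> q; rewrite lee_fin dist_ge0.
Qed.

End mh.
Section core.
Local Open Scope ereal_scope.
Variables (R : realType) (d : nat).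
Local Notation X := (Rd R d).

Lemma mh' (m : probability X R) :
  measurable_fun [set: X] (fun y : X => \int[m]_z (eucl_dist y z)%:E).
Proof. exact: mh. Qed.

Lemma mEdist_l (a : X) : measurable_fun [set: X] (fun x : X => (eucl_dist a x)%:E).
Proof.
apply: (@mEdist_comp R d _ X (fun _ => a) id); [exact: measurable_cst|exact: measurable_id].
Qed.

Lemma mEdist_r (a : X) : measurable_fun [set: X] (fun x : X => (eucl_dist x a)%:E).
Proof.
apply: (@mEdist_comp R d _ X id (fun _ => a)); [exact: measurable_id|exact: measurable_cst].
Qed.

Lemma h_lip (m : probability X R) (a b : X) :
  \int[m]_z (eucl_dist a z)%:E <= (eucl_dist a b)%:E + \int[m]_z (eucl_dist b z)%:E.
Proof.
rewrite -[X in X + _]mule1 -(probability_setT m) -(integral_cst m measurableT).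
rewrite -ge0_integralD //.
- apply: ge0_le_integral => //.
  all: try (by move=> z _; rewrite lee_fin dist_ge0).
  + exact: mEdist_l.
  + by apply: emeasurable_funD; [exact: measurable_cst|exact: mEdist_l].
  + by move=> z _; rewrite /= -EFinD lee_fin dist_tri.
  + exact: mEdist_l.
Qed.

Lemma transfer_snd (p nu : probability X R) (g : probability (X * X)%type R)
  (h : X -> \bar R) : coupling p nu g -> measurable_fun setT h -> (forall x, 0 <= h x) ->
  \int[g]_q h q.2 = \int[nu]_w h w.
Proof.
move=> [_ c2] mh0 h0.
have ms : measurable_fun [set: X * X] (@snd X X) by exact: measurable_snd.
transitivity (\int[pushforward g (@snd X X)]_w h w).
  by rewrite ge0_integral_pushforward.
apply: eq_measure_integral => A mA _ /=.
rewrite /pushforward -c2 //; congr (g _).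
by apply/seteqP; split => [[x y]|[x y]] //=; move=> [].
Qed.

Lemma transfer_fst (p nu : probability X R) (g : probability (X * X)%type R)
  (h : X -> \bar R) : coupling p nu g -> measurable_fun setT h -> (forall x, 0 <= h x) ->
  \int[g]_q h q.1 = \int[p]_w h w.
Proof.
move=> [c1 _] mh0 h0.
have ms : measurable_fun [set: X * X] (@fst X X) by exact: measurable_fst.
transitivity (\int[pushforward g (@fst X X)]_w h w).
  by rewrite ge0_integral_pushforward.
apply: eq_measure_integral => A mA _ /=.
rewrite /pushforward -c1 //; congr (g _).
by apply/seteqP; split => [[x y]|[x y]] //=; move=> [].
Qed.

End core.
Section core2.
Local Open Scope ereal_scope.
Variables (R : realType) (d : nat).
Local Notation X := (Rd R d).

Lemma step (p nu : probability X R) (g : probability (X * X)%type R) :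
  coupling p nu g ->
  \int[nu]_w \int[p]_z (eucl_dist w z)%:E <=
  \int[g]_q (eucl_dist q.1 q.2)%:E + \int[p]_y \int[p]_z (eucl_dist y z)%:E.
Proof.
move=> cpl.
have h0 (m : probability X R) y : 0 <= \int[m]_z (eucl_dist y z)%:E.
  by apply: integral_ge0 => z _; rewrite lee_fin dist_ge0.
rewrite -(transfer_snd (h := fun w => \int[p]_z (eucl_dist w z)%:E) cpl) //; last exact: mh'.
rewrite -(transfer_fst (h := fun w => \int[p]_z (eucl_dist w z)%:E) cpl) //; last exact: mh'.
rewrite -ge0_integralD //.
- apply: ge0_le_integral => //.
  + exact: measurableT_comp (mh' p) measurable_snd.
  + apply: emeasurable_funD; first exact: mEdist.
    exact: measurableT_comp (mh' p) measurable_fst.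
  + move=> q _ /=; rewrite (distC q.1 q.2); exact: h_lip.
- by move=> q _; rewrite lee_fin dist_ge0.
- exact: mEdist.
- exact: measurableT_comp (mh' p) measurable_fst.
Qed.

Lemma core (p nu : probability X R) (g : probability (X * X)%type R) :
  coupling p nu g ->
  \int[nu]_y \int[nu]_z (eucl_dist y z)%:E <=
  \int[g]_q (eucl_dist q.1 q.2)%:E + (\int[g]_q (eucl_dist q.1 q.2)%:E
    + \int[p]_y \int[p]_z (eucl_dist y z)%:E).
Proof.
move=> cpl.
have h0 (m : probability X R) y : 0 <= \int[m]_z (eucl_dist y z)%:E.
  by apply: integral_ge0 => z _; rewrite lee_fin dist_ge0.
apply: le_trans (leeD2l _ (step cpl)).
rewrite -(transfer_snd (h := fun w => \int[nu]_z (eucl_dist w z)%:E) cpl) //; last exact: mh'.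
have E : \int[nu]_w \int[p]_z (eucl_dist w z)%:E =
         \int[g]_q \int[nu]_z (eucl_dist q.1 z)%:E.
  rewrite (transfer_fst (h := fun w => \int[nu]_z (eucl_dist w z)%:E) cpl) //; last exact: mh'.
  rewrite (fubini_tonelli (fun q : X * X => (eucl_dist q.1 q.2)%:E)) /=.
  - by apply: eq_integral => w _; apply: eq_integral => z _; rewrite distC.
  - exact: mEdist.
  - by move=> q; rewrite lee_fin dist_ge0.
rewrite E -ge0_integralD //.
- apply: ge0_le_integral => //.
  + exact: measurableT_comp (mh' nu) measurable_snd.
  + apply: emeasurable_funD; first exact: mEdist.
    exact: measurableT_comp (mh' nu) measurable_fst.
  + move=> q _ /=; rewrite (distC q.1 q.2); exact: h_lip.
- by move=> q _; rewrite lee_fin dist_ge0.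
- exact: mEdist.
- exact: measurableT_comp (mh' nu) measurable_fst.
Qed.

End core2.
Section wb.
Local Open Scope ereal_scope.
Variables (R : realType) (d : nat).
Local Notation X := (Rd R d).

Lemma ge0_neqNy (x : \bar R) : 0 <= x -> x != -oo.
Proof. by case: x. Qed.

Lemma W1_ge0 (p nu : set X -> \bar R) : 0 <= W1 p nu.
Proof.
apply: le_ereal_inf_tmp => _ [g _ <-].
by apply: integral_ge0 => q _; rewrite lee_fin dist_ge0.
Qed.

Lemma W_bound (p nu : probability X R) (cr : R) :
  \int[nu]_y \int[nu]_z (eucl_dist y z)%:E = cr%:E ->
  cr%:E <= W1 p nu + (W1 p nu + \int[p]_y \int[p]_z (eucl_dist y z)%:E).
Proof.
move=> hc.
have W0 := W1_ge0 p nu.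
have D0 : 0 <= \int[p]_y \int[p]_z (eucl_dist y z)%:E.
  by apply: integral_ge0 => y _; apply: integral_ge0 => z _; rewrite lee_fin dist_ge0.
set W := W1 p nu in W0 *; set D := \int[p]_y _ in D0 *.
move: W0; case HW : W => [w||//] W0; last first.
  by rewrite addye ?leey // ge0_neqNy // adde_ge0.
move: D0; case HD : D => [r||//] D0; last by rewrite addey ?addey ?leey.
rewrite -!EFinD lee_fin leNgt; apply/negP => H.
pose e := ((cr - (w + (w + r))) / 2)%R.
have e0 : (0 < e)%R by rewrite /e divr_gt0 // subr_gt0.
have : ereal_inf [set (\int[gamma]_p (eucl_dist p.1 p.2)%:E)%E
            | gamma in [set gamma : probability (Rd R d * Rd R d)%type R
                       | coupling p nu gamma]] \is a fin_num.
  by rewrite -[ereal_inf _]/W HW.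
move/(lb_ereal_inf_adherent e0) => [_ [g cg <-]].
rewrite -[ereal_inf _]/W HW => Hlt.
have := core cg; rewrite hc.
have G0 : 0 <= \int[g]_q (eucl_dist q.1 q.2)%:E.
  by apply: integral_ge0 => q _; rewrite lee_fin dist_ge0.
move: Hlt G0; set G := \int[g]_q _.
case: G => [gr| |] //= Hlt G0.
rewrite -/D HD -!EFinD lee_fin => Hc.
move: Hlt; rewrite -EFinD lte_fin => Hlt.
have eE : (e * 2 = cr - (w + (w + r)))%R by rewrite /e divfK // pnatr_eq0.
clearbody e; move: Hc Hlt eE H; clear; move=> Hc Hlt eE H.
lra.
Qed.

End wb.
Section kprob.
Local Open Scope ereal_scope.
Variables (R : realType) (d : nat) (k : R.-pker (Rd R d) ~> (Rd R d)) (x : Rd R d).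
Definition kp : set (Rd R d) -> \bar R := k x.
HB.instance Definition _ := Measure.on kp.
HB.instance Definition _ := Measure_isProbability.Build _ _ _ kp (@prob_kernel _ _ _ _ _ k x).
End kprob.

Section cfacts.
Local Open Scope ereal_scope.
Variables (R : realType) (d : nat).
Local Notation X := (Rd R d).

Lemma c_fin (nu : probability X R) :
  \int[nu]_y (eucl_dist y 0)%:E < +oo ->
  \int[nu]_y \int[nu]_z (eucl_dist y z)%:E < +oo.
Proof.
move=> m1.
set M := \int[nu]_y (eucl_dist y 0)%:E in m1 *.
have M0 : 0 <= M by apply: integral_ge0 => y _; rewrite lee_fin dist_ge0.
have M' : \int[nu]_z (eucl_dist 0 z)%:E = M.
  by apply: eq_integral => z _; rewrite distC.
apply: (@le_lt_trans _ _ (\int[nu]_y ((eucl_dist y 0)%:E + cst M y))).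
  apply: ge0_le_integral => //.
  - by move=> y _; apply: integral_ge0 => z _; rewrite lee_fin dist_ge0.
  - exact: mh'.
  - by apply: emeasurable_funD => //; exact: mEdist_r.
  - by move=> y _ /=; rewrite -M'; exact: h_lip.
rewrite ge0_integralD //.
- rewrite integral_cst //.
  rewrite -/M lte_add_pinfty //.
  apply: (@le_lt_trans _ _ (M * 1)); last by rewrite mule1.
  apply: lee_wpmul2l => //; exact: probability_le1.
- by move=> y _; rewrite lee_fin dist_ge0.
- by exact: mEdist_r.
Qed.

End cfacts.
Section cpos.
Local Open Scope ereal_scope.
Variables (R : realType) (d : nat).
Local Notation X := (Rd R d).

Lemma ae_zero (nu : probability X R) (f : X -> \bar R) :
  measurable_fun setT f -> (forall x, 0 <= f x) -> \int[nu]_x f x = 0 ->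
  exists N, [/\ measurable N, nu N = 0 & forall x, f x <> 0 -> N x].
Proof.
move=> mf f0 i0.
have : \int[nu]_(x in setT) `|f x| = 0.
  by rewrite -i0; apply: eq_integral => x _; rewrite gee0_abs.
move/(ae_eq_integral_abs nu measurableT mf) => [N [mN N0 sN]].
exists N; split => // x fx; apply: sN => /=; move=> H; apply: fx; exact: H.
Qed.

Lemma c_pos (nu : probability X R) :
  (forall a : X, exists2 B : set X, measurable B & nu B <> \d_a B) ->
  \int[nu]_y \int[nu]_z (eucl_dist y z)%:E <> 0.
Proof.
move=> nd c0.
have g0 : forall y : X, 0 <= \int[nu]_z (eucl_dist y z)%:E.
  by move=> y; apply: integral_ge0 => z _; rewrite lee_fin dist_ge0.
have [N [mN N0 sN]] := ae_zero (mh' nu) g0 c0.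
have [y0 Ny0] : exists y0, ~ N y0.
  apply: contrapT => /forallNP H.
  have NT : N = setT by apply/seteqP; split => // y _; apply: contrapT; exact: H.
  have := probability_setT nu; rewrite -NT N0 => /eqP; by rewrite eqe eq_sym oner_eq0.
have h0 : \int[nu]_z (eucl_dist y0 z)%:E = 0.
  by apply: contrapT => H; apply: Ny0; exact: sN.
have g1 : forall z : X, 0 <= (eucl_dist y0 z)%:E.
  by move=> z; rewrite lee_fin dist_ge0.
have [N2 [mN2 N20 sN2]] := ae_zero (mEdist_l y0) g1 h0.
have key z : z <> y0 -> N2 z.
  move=> zy; apply: sN2 => /eqP; rewrite eqe => /eqP /dist_eq0 H.
  by apply: zy; rewrite H.
have [B mB hB] := nd y0.
apply: hB; rewrite diracE.
have [By0|By0] := pselect (B y0).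
  rewrite mem_set //.
  have : nu (~` B) = 0.
    apply: (subset_measure0 (measurableC mB) mN2) => // z Bz.
    by apply: key => zy; apply: Bz; rewrite zy.
  rewrite probability_setC //; case: (nu B) => [r||] //=.
  by rewrite -EFinB => /eqP; rewrite eqe subr_eq0 => /eqP <-.
rewrite memNset //.
apply: (subset_measure0 mB mN2) => // z Bz.
by apply: key => zy; apply: By0; rewrite -zy.
Qed.

End cpos.
Unset Implicit Arguments.
Theorem mainTheorem5 (R : realType) (d : nat)
  (mu nu : probability (Rd R d) R)
  (pi : probability (Rd R d * Rd R d)%type R)
  (k : R.-pker (Rd R d) ~> (Rd R d)) :
  (\int[nu]_y (eucl_dist y 0)%:E < +oo)%E ->
  (forall a : Rd R d, exists2 B : set (Rd R d), measurable B & nu B <> \d_a B) ->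
  coupling mu nu pi ->
  disintegration mu pi k ->
  (T_DGS mu nu k <= 2%:E * W_corr mu nu k)%E.
Proof.
move=> m1 nd _ _.
rewrite /T_DGS /W_corr /ediv.
set c := (\int[nu]_y \int[nu]_z (eucl_dist y z)%:E)%E.
have c0 : (0 <= c)%E.
  by apply: integral_ge0 => y _; apply: integral_ge0 => z _; rewrite lee_fin dist_ge0.
have cfin : (c < +oo)%E := c_fin m1.
have cne : c <> 0%E := c_pos nd.
move: c0 cfin cne; case Hc : c => [cr||] //= c0 _ cne.
have cr0 : 0 < cr by rewrite lt_def; apply/andP; split; [apply/eqP => H; apply: cne; rewrite H|rewrite -lee_fin].
Local Open Scope ereal_scope.
set Dk := fun x => \int[k x]_y \int[k x]_z (eucl_dist y z)%:E.
set Wk := fun x => W1 (k x) nu.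
have Wb x : cr%:E <= Wk x + (Wk x + Dk x) := @W_bound R d (kp k x) nu cr Hc.
have D0 x : 0 <= Dk x.
  by apply: integral_ge0 => y _; apply: integral_ge0 => z _; rewrite lee_fin dist_ge0.
have W0 x : 0 <= Wk x := W1_ge0 _ _.
set L := fun x => Order.max ((cr%:E - Dk x) * (2^-1)%:E) 0.
have L0 x : 0 <= L x by rewrite /L le_max lexx orbT.
have LW x : L x <= Wk x.
  rewrite /L ge_max W0 andbT.
  have := Wb x; move: (W0 x) (D0 x).
  case: (Wk x) => [w||] //; case: (Dk x) => [r||] // _ _.
  - move=> H; rewrite -EFinB -EFinM lee_fin.
    move: H; rewrite -!EFinD lee_fin => H; lra.
  - by move=> _; rewrite /= gt0_mulNye ?leNye // lte_fin invr_gt0.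
  - by move=> _; rewrite leey.
  - by move=> _; rewrite leey.
have LD x : cr%:E <= Dk x + (L x + L x).
  have l1 : (cr%:E - Dk x) * (2^-1)%:E <= L x by rewrite /L le_max lexx.
  move: (L0 x) l1; case: (L x) => [l||] //; last first.
    by move=> _ _; rewrite addey ?addey ?leey // ge0_neqNy.
  move: (D0 x); case: (Dk x) => [r||] //; last by move=> _ _ _; rewrite addye ?leey.
  move=> _ _ H.
  rewrite -!EFinD lee_fin.
  move: H; rewrite -EFinB -EFinM lee_fin => H; lra.
have mD : measurable_fun setT Dk := mDk k.
have mL : measurable_fun setT L.
  apply: (@measurable_maxe _ _ _ setT (fun x => (cr%:E - Dk x) * (2^-1)%:E) (cst 0)).
  - apply: emeasurable_funM; last exact: measurable_cst.
    by apply: emeasurable_funB => //; exact: measurable_cst.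
  - exact: measurable_cst.
have Hi : cr%:E <= \int[mu]_x (Dk x + (L x + L x)).
  rewrite -[cr%:E]mule1 -(probability_setT mu) -(integral_cst mu measurableT).
  by apply: le_integral_nm => // x.
rewrite (@ge0_integralD _ _ _ mu setT measurableT Dk (fun x => L x + L x)) // in Hi; last first.
- exact: emeasurable_funD.
- by move=> x _; rewrite adde_ge0.
rewrite (@ge0_integralD _ _ _ mu setT measurableT L L) // in Hi.
have LWi : \int[mu]_x L x <= \int[mu]_x Wk x by exact: le_integral_nm.
have {}Hi := le_trans Hi (leeD2l _ (leeD LWi LWi)).
have IDge0 : 0 <= \int[mu]_x Dk x by exact: integral_ge0.
have IWge0 : 0 <= \int[mu]_x Wk x by exact: integral_ge0.
have ci0 : (0 < cr^-1)%R by rewrite invr_gt0.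
move: Hi IDge0 IWge0.
case: (\int[mu]_x Dk x) => [a||] //; case: (\int[mu]_x Wk x) => [w||] //.
- rewrite -!EFinD lee_fin => H _ _.
  rewrite -!EFinM lee_fin.
  rewrite -subr_ge0.
  have -> : (2 * (w * cr^-1) - (1 - a / cr) = (a + (w + w) - cr) * cr^-1)%R.
    by field; rewrite gt_eqF.
  by apply: mulr_ge0; [rewrite subr_ge0|exact: ltW].
- by move=> _ _ _; rewrite gt0_mulye ?lte_fin // gt0_muley ?lte_fin // leey.
- by move=> _ _ _; rewrite gt0_mulye ?lte_fin // leNye.
- by move=> _ _ _; rewrite gt0_mulye ?lte_fin // leNye.
Qed.
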